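(* Let $K$ be a field of characteristic zero, $g\ge 3$ and $c\ge 3$. Then $\alpha(M_{g,c})=\dim M_{g,c}-g$.
   Context: Lower central series: $\mathfrak{h}^1=\mathfrak{h}$, $\mathfrak{h}^{k+1}=[\mathfrak{h},\mathfrak{h}^k]$. $F_g$ is the free Lie algebra over $K$ on $g$ generators, $F_{g,c}=F_g/F_g^{c+1}$, and $M_{g,c}:=F_{g,c}/[F_{g,c}^2,F_{g,c}^2]$. $\alpha(\mathfrak{h})$ is the maximal dimension of an abelian subalgebra of $\mathfrak{h}$. *)

(* Defs.v *)
From HB Require Import structures.
From mathcomp Require Import all_boot all_order all_algebra.
Set Implicit Arguments. Unset Strict Implicit. Unset Printing Implicit Defensive.
Import GRing.Theory.
Local Open Scope ring_scope.

Section Lie.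
Variables (K : fieldType) (V : lmodType K).

Definition is_lie_bracket (br : V -> V -> V) : Prop :=
  [/\ forall a x y z, br (a *: x + y) z = a *: br x z + br y z,
      forall a x y z, br z (a *: x + y) = a *: br z x + br z y,
      forall x, br x x = 0 &
      forall x y z, br x (br y z) + br y (br z x) + br z (br x y) = 0].

Definition in_span (S : V -> Prop) (v : V) : Prop :=
  exists n (a : 'I_n -> K) (w : 'I_n -> V),
    (forall i, S (w i)) /\ v = \sum_(i < n) a i *: w i.

(* lcs br k = h^{k+1} : lower central series, h^1 = h, h^{k+1} = [h, h^k] *)
Fixpoint lcs (br : V -> V -> V) (k : nat) : V -> Prop :=
  match k with
  | 0 => fun _ => True
  | k'.+1 => in_span (fun v => exists x y, lcs br k' y /\ v = br x y)
  end.

Definition nilp_class_le (br : V -> V -> V) (c : nat) : Prop :=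
  forall v, lcs br c v -> v = 0.

Definition metabelian (br : V -> V -> V) : Prop :=
  forall x y, lcs br 1 x -> lcs br 1 y -> br x y = 0.

Definition lie_generated (br : V -> V -> V) (I : Type) (x : I -> V) : Prop :=
  forall P : V -> Prop,
    P 0 -> (forall a u v, P u -> P v -> P (a *: u + v)) ->
    (forall u v, P u -> P v -> P (br u v)) ->
    (forall i, P (x i)) -> forall v, P v.

End Lie.

Definition lie_hom (K : fieldType) (V W : lmodType K)
  (brV : V -> V -> V) (brW : W -> W -> W) (f : V -> W) : Prop :=
  (forall a u v, f (a *: u + v) = a *: f u + f v) /\
  (forall u v, f (brV u v) = brW (f u) (f v)).

(* (M, br, x) is the free nilpotent-of-class-c metabelian Lie algebra on the
   g generators x, i.e. M_{g,c} = F_{g,c} / [F_{g,c}^2, F_{g,c}^2]: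
   it lies in the variety (class <= c, metabelian), is generated by x, and
   every assignment of the generators in a Lie algebra of that variety
   extends to a Lie algebra homomorphism. *)
Definition is_free_nilp_metabelian (K : fieldType) (g c : nat)
  (M : lmodType K) (br : M -> M -> M) (x : 'I_g -> M) : Prop :=
  [/\ is_lie_bracket br, lie_generated br x, nilp_class_le br c,
      metabelian br &
      forall (L : lmodType K) (brL : L -> L -> L) (y : 'I_g -> L),
        is_lie_bracket brL -> nilp_class_le brL c -> metabelian brL ->
        exists f : M -> L, lie_hom br brL f /\ forall i, f (x i) = y i].

Definition abelian_subalg (K : fieldType) (M : vectType K)
  (br : M -> M -> M) (U : {vspace M}) : Prop :=
  forall u v, u \in U -> v \in U -> br u v = 0.

Definition alpha_eq (K : fieldType) (M : vectType K)
  (br : M -> M -> M) (n : nat) : Prop :=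
  (exists U : {vspace M}, abelian_subalg br U /\ \dim U = n) /\
  (forall U : {vspace M}, abelian_subalg br U -> (\dim U <= n)%N).

(* Main.v *)
Require Import Defs.
From HB Require Import structures.
From mathcomp Require Import all_boot all_order all_algebra.
From mathcomp Require Import ring zify.
Set Implicit Arguments. Unset Strict Implicit. Unset Printing Implicit Defensive.
Import GRing.Theory.
Local Open Scope ring_scope.

Section Lin.
Variables (K : fieldType) (V W : lmodType K) (F : V -> W).
Hypothesis HF : forall a x y, F (a *: x + y) = a *: F x + F y.
Lemma linF0 : F 0 = 0.
Proof.
by have := HF (-1) 0 0; rewrite scaler0 addr0 scaleN1r addNr.
Qed.
Lemma linFD u v : F (u + v) = F u + F v.
Proof. by have := HF 1 u v; rewrite !scale1r. Qed.
Lemma linFZ a u : F (a *: u) = a *: F u.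
Proof. by have := HF a u 0; rewrite !addr0 linF0 addr0. Qed.
Lemma linFsum n (a : 'I_n -> K) (w : 'I_n -> V) :
  F (\sum_(i < n) a i *: w i) = \sum_(i < n) a i *: F (w i).
Proof.
elim: n a w => [|n IH] a w; first by rewrite !big_ord0 linF0.
by rewrite !big_ord_recr /= linFD linFZ IH.
Qed.
End Lin.
Section Model.
Variable K : fieldType.
Notation L := 'rV[K]_4.
Notation i0 := (@Ordinal 4 0 isT).
Notation i1 := (@Ordinal 4 1 isT).
Notation i2 := (@Ordinal 4 2 isT).

Definition brL (p q : L) : L := \row_(i < 4)
  (if val i == 2%N then p 0 i0 * q 0 i1 - p 0 i1 * q 0 i0
   else if val i == 3%N then p 0 i0 * q 0 i2 - p 0 i2 * q 0 i0 else 0).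

Lemma brL_lie : is_lie_bracket brL.
Proof.
split.
- move=> a u v z; apply/rowP => i; rewrite !mxE.
  by case: ifP => _; [|case: ifP => _]; ring.
- move=> a u v z; apply/rowP => i; rewrite !mxE.
  by case: ifP => _; [|case: ifP => _]; ring.
- move=> u; apply/rowP => i; rewrite !mxE.
  by case: ifP => _; [|case: ifP => _]; ring.
- move=> u v w; apply/rowP => i; rewrite !mxE /=.
  by case: ifP => _; [|case: ifP => _]; ring.
Qed.

Definition Pk (k : nat) (v : L) := forall i : 'I_4, (0 < k)%N -> (val i <= k)%N -> v 0 i = 0.

Lemma lcsL k v : lcs brL k v -> Pk k v.
Proof.
elim: k v => [|k IH] v; first by move=> _ i.
move=> [n [a [w [Hw ->]]]] i _ Hi; rewrite summxE big1 // => j _.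
have [p [q [/IH Hq ->]]] := Hw j.
rewrite !mxE; case: eqP => [E|_].
  by rewrite !Hq //=; try (move: E Hi; lia); ring.
case: eqP => [E|_]; last by rewrite mulr0.
by rewrite !Hq //=; try (move: E Hi; lia); ring.
Qed.

Lemma nilpL c : (3 <= c)%N -> nilp_class_le brL c.
Proof.
move=> hc v /lcsL P; apply/rowP => i; rewrite mxE P //; first lia.
by apply: leq_trans hc; rewrite -ltnS ltn_ord.
Qed.

Lemma metaL : metabelian brL.
Proof.
move=> u v /lcsL Pu /lcsL Pv; apply/rowP => i; rewrite !mxE.
rewrite (Pu i0) // (Pu i1) // (Pv i0) // (Pv i1) //.
by case: ifP => _; [|case: ifP => _]; ring.
Qed.
End Model.
Notation i0 := (@Ordinal 4 0 isT).
Notation i1 := (@Ordinal 4 1 isT).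
Notation i2 := (@Ordinal 4 2 isT).

Section Main.
Variables (K : fieldType) (g c : nat) (M : vectType K) (br : M -> M -> M)
  (x : 'I_g -> M).
Hypotheses (hg : (3 <= g)%N) (hc : (3 <= c)%N)
  (H : @is_free_nilp_metabelian K g c M br x).

Let Hlie : is_lie_bracket br. Proof. by case: H. Qed.
Let Hgen : lie_generated br x. Proof. by case: H. Qed.
Let Hmeta : metabelian br. Proof. by case: H. Qed.
Let Huniv : forall (L : lmodType K) (brL : L -> L -> L) (y : 'I_g -> L),
        is_lie_bracket brL -> nilp_class_le brL c -> metabelian brL ->
        exists f : M -> L, lie_hom br brL f /\ forall i, f (x i) = y i.
Proof. by case: H. Qed.

Lemma brl_lin z : forall a u v, br (a *: u + v) z = a *: br u z + br v z.
Proof. by move=> a u v; case: Hlie => H1 _ _ _; apply: H1. Qed.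
Lemma brr_lin z : forall a u v, br z (a *: u + v) = a *: br z u + br z v.
Proof. by move=> a u v; case: Hlie => _ H1 _ _; apply: H1. Qed.

Definition bs := vbasis (fullv : {vspace M}).
Definition S := [seq br u v | u <- (bs : seq M), v <- (bs : seq M)].
Definition D := <<S>>%VS.

Lemma brD u v : br u v \in D.
Proof.
rewrite (coord_vbasis (memvf u)) (coord_vbasis (memvf v)).
rewrite (linFsum (brl_lin _)); apply: memv_suml => i _; apply: memvZ.
rewrite (linFsum (brr_lin _)); apply: memv_suml => j _; apply: memvZ.
by apply: memv_span; apply: allpairs_f; apply: mem_nth; rewrite size_tuple ltn_ord.
Qed.

Lemma D_exp d : d \in D -> exists n (a : 'I_n -> K) (p q : 'I_n -> M),
  d = \sum_(i < n) a i *: br (p i) (q i).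
Proof.
move/(coord_span (X := in_tuple S)) => ->.
have : forall i : 'I_(size S), exists pq : M * M, (in_tuple S)`_i = br pq.1 pq.2.
  move=> i; have /allpairsP [pq [_ _ E]] : (in_tuple S)`_i \in S.
    by apply: mem_nth; rewrite ltn_ord.
  by exists pq.
case/fin_all_exists => pq Hpq.
exists (size S), (fun i => coord (in_tuple S) i d), (fun i => (pq i).1), (fun i => (pq i).2).
by apply: eq_bigr => i _; rewrite Hpq.
Qed.

Lemma D_lcs1 d : d \in D -> lcs br 1 d.
Proof.
case/D_exp => n [a [p [q ->]]].
exists n, a, (fun i => br (p i) (q i)); split => // i.
by exists (p i), (q i).
Qed.

Lemma hom_D f : lie_hom br (@brL K) f -> forall d, d \in D ->
  (f d) 0 i0 = 0 /\ (f d) 0 i1 = 0.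
Proof.
move=> [Hl Hb] d /D_exp [n [a [p [q ->]]]].
rewrite (linFsum Hl) !summxE; split; apply: big1 => i _;
  by rewrite Hb !mxE /= mulr0.
Qed.

Definition ev (m : nat) : 'rV[K]_4 := \row_(l < 4) ((val l == m)%:R).
Definition ym (k j : 'I_g) (i : 'I_g) : 'rV[K]_4 :=
  if i == k then ev 0 else if i == j then ev 1 else 0.

Lemma model (k j : 'I_g) : k != j -> exists f : M -> 'rV[K]_4,
  [/\ lie_hom br (@brL K) f, (forall i, f (x i) = ym k j i) &
   forall (al : 'I_g -> K) d, d \in D ->
     (f (\sum_i al i *: x i + d)) 0 i0 = al k /\
     (f (\sum_i al i *: x i + d)) 0 i1 = al j].
Proof.
move=> hkj.
have [f [Hf Hx]] := Huniv (ym k j) (@brL_lie K) (@nilpL K c hc) (@metaL K).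
exists f; split => // al d Hd.
have [h0 h1] := hom_D Hf Hd.
case: (Hf) => Hl _.
rewrite (linFD Hl) (linFsum Hl) !mxE !summxE h0 h1 !addr0; split.
  rewrite (bigD1 k) //= big1 ?addr0 => [|i /negbTE ik].
    by rewrite Hx /ym eqxx !mxE /= mulr1.
  by rewrite Hx /ym ik; case: ifP => _; rewrite !mxE /= mulr0.
rewrite (bigD1 j) //= big1 ?addr0 => [|i /negbTE ij].
  by rewrite Hx /ym eq_sym (negbTE hkj) eqxx !mxE /= mulr1.
by rewrite Hx /ym ij; case: ifP => _; rewrite !mxE /= mulr0.
Qed.

Definition other (k : 'I_g) : 'I_g :=
  if val k == 0%N then Ordinal (leq_trans (isT : (1 < 3)%N) hg)
  else Ordinal (leq_trans (isT : (0 < 3)%N) hg).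

Lemma other_neq k : k != other k.
Proof.
rewrite /other; case: ifP => /eqP E; apply/negP => /eqP h0; have /= h := congr1 val h0.
  by move: E h => /= ->.
by move: E h => /= E h; apply: E.
Qed.

Lemma coef_uniq (al be : 'I_g -> K) d d' : d \in D -> d' \in D ->
  \sum_i al i *: x i + d = \sum_i be i *: x i + d' -> forall i, al i = be i.
Proof.
move=> Hd Hd' E k.
have [f [_ _ Hc]] := model (other_neq k).
have [h1 _] := Hc al d Hd; have [h2 _] := Hc be d' Hd'.
by rewrite -h1 -h2 E.
Qed.

Lemma decomp v : exists (al : 'I_g -> K) d, d \in D /\ v = \sum_i al i *: x i + d.
Proof.
move: v; apply: (Hgen (P := fun v => exists (al : 'I_g -> K) d, d \in D /\ v = \sum_i al i *: x i + d)).
- exists (fun _ => 0), 0; split; first exact: mem0v.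
  by rewrite big1 ?addr0 // => i _; rewrite scale0r.
- move=> a u w [al [du [Hu ->]]] [be [dw [Hw ->]]].
  exists (fun i => a * al i + be i), (a *: du + dw); split.
    by apply: memvD => //; apply: memvZ.
  under [X in _ = X + _]eq_bigr do rewrite scalerDl -scalerA.
  by rewrite big_split /= -scaler_sumr scalerDr addrACA.
- move=> u w _ _; exists (fun _ => 0), (br u w); split; first exact: brD.
  by rewrite big1 ?add0r // => i _; rewrite scale0r.
- move=> i; exists (fun l => (l == i)%:R), 0; split; first exact: mem0v.
  rewrite addr0 (bigD1 i) //= eqxx scale1r big1 ?addr0 // => l /negbTE ->.
  by rewrite scale0r.
Qed.

Definition Xt : g.-tuple M := [tuple x i | i < g].

Lemma Xt_nth (i : 'I_g) : Xt`_i = x i.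
Proof. by rewrite nth_mktuple. Qed.

Lemma dimX : \dim <<Xt>> = g.
Proof.
have : free Xt.
  apply/freeP => k Hk i.
  have := @coef_uniq k (fun _ => 0) 0 0 (mem0v _) (mem0v _); apply.
  rewrite [in RHS]big1 ?addr0; last by move=> l _; rewrite scale0r.
  rewrite -[RHS]Hk; apply: eq_bigr => l _; by rewrite Xt_nth.
by rewrite /free size_tuple => /eqP.
Qed.

Lemma capXD : (<<Xt>> :&: D = 0)%VS.
Proof.
apply/eqP; rewrite -subv0; apply/subvP => v; rewrite memv_cap => /andP[Hx Hd].
rewrite memv0; move/coord_span: Hx => Ev.
have E : \sum_i coord Xt i v *: x i + 0 = \sum_i (fun _ => 0) i *: x i + v.
  rewrite addr0 [in RHS]big1 ?add0r; last by move=> l _; rewrite scale0r.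
  by rewrite {2}Ev; apply: eq_bigr => l _; rewrite Xt_nth.
have Hc := coef_uniq (mem0v _) Hd E.
by rewrite Ev big1 // => l _; rewrite Hc scale0r.
Qed.

Lemma dimD : \dim (fullv : {vspace M}) = (\dim D + g)%N.
Proof.
have E : (<<Xt>> + D)%VS = fullv.
  apply/eqP; rewrite eqEsubv subvf /=; apply/subvP => v _.
  have [al [d [Hd ->]]] := decomp v.
  apply: memv_add => //; apply: memv_suml => i _; apply: memvZ.
  by rewrite -Xt_nth; apply: memv_span; apply: mem_nth; rewrite size_tuple.
by rewrite -E dimv_disjoint_sum ?capXD // dimX addnC.
Qed.

Lemma upper (U : {vspace M}) : abelian_subalg br U -> (\dim U <= \dim D)%N.
Proof.
move=> HU.
have [UD|nUD] := boolP (U <= D)%VS; first exact: dimvS.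
have : ~~ all (fun v => v \in D) (vbasis U).
  apply: contra nUD => /allP h.
  by rewrite -(span_basis (vbasisP U)); apply/span_subvP => v /h.
case/allPn => a /vbasis_mem Ua nDa.
have [al [da [Hda Ea]]] := decomp a.
have [k alk] : exists k, al k != 0.
  case: (boolP [exists k, al k != 0]) => [/existsP //|/existsPn h].
  case/negP: nDa; rewrite Ea big1 ?add0r // => i _.
  by move: (h i); rewrite negbK => /eqP ->; rewrite scale0r.
have S1 : (U <= (U :&: D) + <[a]>)%VS.
  apply/subvP => b Ub.
  have [be [db [Hdb Eb]]] := decomp b.
  have minor : forall i j, al i * be j = al j * be i.
    move=> i j; have [->|ij] := eqVneq i j; first by [].
    have [f [[Hl Hb] _ Hc]] := model ij.
    have := HU a b Ua Ub => /(congr1 f).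
    rewrite Hb (linF0 Hl) => E0.
    have := congr1 (fun m : 'rV[K]_4 => m 0 i2) E0; rewrite !mxE /=.
    have [h0 h1] := Hc al da Hda; have [h0' h1'] := Hc be db Hdb.
    rewrite Ea Eb h0 h1 h0' h1' => /eqP; rewrite subr_eq0 => /eqP.
    by rewrite mulrC [al j * _]mulrC.
  set lam := be k / al k.
  have Esum : \sum_i be i *: x i = lam *: \sum_i al i *: x i.
    rewrite scaler_sumr; apply: eq_bigr => i _; rewrite scalerA; congr (_ *: _).
    rewrite /lam; apply: (mulfI alk); rewrite minor; field; exact: alk.
  have E : b - lam *: a = db - lam *: da.
    by rewrite Eb Ea Esum scalerDr opprD addrACA subrr add0r.
  rewrite -(subrK (lam *: a) b); apply: memv_add; last by apply: memvZ; apply: memv_line.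
  rewrite memv_cap; apply/andP; split.
    by apply: memvB => //; apply: memvZ.
  by rewrite E; apply: memvB => //; apply: memvZ.
have S2 : (\dim U <= \dim (U :&: D) + 1)%N.
  apply: leq_trans (dimvS S1) _.
  apply: leq_trans (dimv_add_leqif _ _).1 _.
  by rewrite dim_vline leq_add2l leq_b1.
set j := other k.
have nz : br a (br (x k) (x j)) != 0.
  have [f [[Hl Hb] Hx Hc]] := model (other_neq k).
  apply/eqP => /(congr1 f); rewrite Hb Hb !Hx (linF0 Hl).
  move=> E0; have := congr1 (fun m : 'rV[K]_4 => m 0 (@Ordinal 4 3 isT)) E0.
  rewrite !mxE /=.
  have [h0 _] := Hc al da Hda.
  rewrite /ym eqxx eq_sym (negbTE (other_neq k)) eqxx !mxE /=.
  rewrite -Ea in h0; rewrite h0 => h; case/eqP: alk.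
  by rewrite -[RHS]h; ring.
have S3 : (\dim (U :&: D) < \dim D)%N.
  rewrite (ltn_leqif (dimv_leqif_eq (capvSr U D))).
  apply/negP => /eqP E.
  have : br (x k) (x j) \in (U :&: D)%VS by rewrite E brD.
  rewrite memv_cap => /andP[Uu _].
  by case/eqP: nz; apply: HU.
by apply: leq_trans S2 _; rewrite addn1.
Qed.

Lemma main_thm : alpha_eq br (\dim (fullv : {vspace M}) - g)%N.
Proof.
rewrite dimD addnK; split.
  exists D; split => // u v /D_lcs1 Hu /D_lcs1 Hv; exact: Hmeta.
exact: upper.
Qed.
End Main.

Theorem corollary5p3 (K : fieldType) (charK0 : [pchar K] =i pred0)
  (g c : nat) (hg : (3 <= g)%N) (hc : (3 <= c)%N)
  (M : vectType K) (br : M -> M -> M) (x : 'I_g -> M) :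
  @is_free_nilp_metabelian K g c M br x ->
  alpha_eq br (\dim (fullv : {vspace M}) - g)%N.
Proof. by move=> H; apply: (main_thm hg hc H). Qed.
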